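(* Let $\mathbb G$ be a step-two Carnot group, let $n\geq\operatorname{rank}\mathbb G$ and $k\in\{0,\dots,n\}$ be integers, and let $\pi:\mathbb F_n\to\mathbb G$ be a surjective Carnot morphism. For $\eta\in\Lambda^{n-k}(\mathbb R^n)$ the following are equivalent: (a) there is a map $\psi_\eta:\mathbb G\to\Lambda^n(\mathbb R^n)$ such that $\psi_\eta\circ\pi=\widetilde\psi_\eta$; (b) $\widetilde\psi_\eta(\theta,\omega)=\widetilde\psi_\eta(\theta',\omega')$ for all $(\theta,\omega)\in\mathbb F_n$ and all $(\theta',\omega')\in(\theta,\omega)\cdot\ker\pi$; (c) $\eta\in\Lambda^{n-k}(\pi)$. Furthermore, when these conditions hold, the map $\psi_\eta$ in (a) is unique.
   Context: A step-two Carnot group is $\mathbb G=V_1\times V_2$ ($V_1,V_2$ finite-dimensional real vector spaces, $V_2\ne\{0\}$) with a bilinear skew-symmetric $[\cdot,\cdot]:V_1\times V_1\to V_2$ whose image spans $V_2$, and group law $(x,z)\cdot(x',z')=(x+x',z+z'+[x,x'])$; $\operatorname{rank}\mathbb G=\dim V_1$. $\mathbb F_n=\Lambda^1(\mathbb R^n)\times\Lambda^2(\mathbb R^n)$ with bracket $[\theta,\theta']=\theta\wedge\theta'$. A Carnot morphism $\pi:\mathbb G\to\mathbb G'$ is $\pi(x,z)=(\pi_1(x),\pi_2(z))$ with $\pi_1,\pi_2$ linear and $\pi_2([x,y])=[\pi_1(x),\pi_1(y)]'$. For $\eta\in\Lambda^m(\mathbb R^n)$, $\operatorname{Anh}^{1,2}_\wedge\eta:=\{(\theta,\omega)\in\mathbb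 F_n:\theta\wedge\eta=0,\ \omega\wedge\eta=0\}$ and $\Lambda^m(\pi):=\{\eta\in\Lambda^m(\mathbb R^n):\ker\pi\subset\operatorname{Anh}^{1,2}_\wedge\eta\}$. For $\eta\in\Lambda^{n-k}(\mathbb R^n)$, $\widetilde\psi_\eta:\mathbb F_n\to\Lambda^n(\mathbb R^n)$ is $\widetilde\psi_\eta(\theta,\omega)=\omega^{k/2}\wedge\eta$ if $k$ is even and $\theta\wedge\omega^{(k-1)/2}\wedge\eta$ if $k$ is odd ($\omega^j$ the exterior power, $\omega^0=1$). *)

(* Defs.v *)
From HB Require Import structures.
From mathcomp Require Import all_boot all_order all_algebra.
From mathcomp Require Import reals.
Set Implicit Arguments. Unset Strict Implicit. Unset Printing Implicit Defensive.
Import Order.TTheory GRing.Theory Num.Theory.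
Local Open Scope ring_scope.

Section Exterior.
Variable R : comNzRingType.
Variable n : nat.

(* Full exterior algebra Λ(R^n): coefficients on the standard basis e_A, A ⊆ {0..n-1}. *)
Local Notation ext := {ffun {set 'I_n} -> R}.

(* sign of e_A ∧ e_B = (-1)^{#{(a,b) ∈ A×B : b < a}} e_{A ∪ B} for disjoint A, B *)
Definition esign (A B : {set 'I_n}) : R :=
  (-1) ^+ #|[set p : 'I_n * 'I_n | [&& p.1 \in A, p.2 \in B & (p.2 < p.1)%N]]|.

Definition ext_wedge (a b : ext) : ext :=
  [ffun C : {set 'I_n} =>
     \sum_(A in powerset C) esign A (C :\: A) * a A * b (C :\: A)].

Definition ext_one : ext := [ffun A : {set 'I_n} => (A == set0)%:R].

Definition ext_pow (w : ext) (j : nat) : ext := iter j (ext_wedge w) ext_one.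

(* Index set of the basis of Λ^m(R^n): the m-element subsets of {0..n-1}. *)
Definition ksub (m : nat) := {A : {set 'I_n} | #|A| == m}.

Local Notation Lam m := {ffun ksub m -> R^o}.

Definition inj m (a : Lam m) : ext :=
  [ffun A : {set 'I_n} =>
     (if @insub _ (fun B : {set 'I_n} => #|B| == m) (ksub m) A is Some s
     then a s else 0 : R)].
Definition proj m (a : ext) : Lam m := [ffun A : ksub m => a (sval A)].

Definition wedge p q (a : Lam p) (b : Lam q) : Lam (p + q) :=
  proj (p + q) (ext_wedge (inj a) (inj b)).

End Exterior.

Notation ext R n := {ffun {set 'I_n} -> R}.
Notation Lam R n m := {ffun ksub n m -> R^o}.

(* The free step-two Carnot group F_n = Λ^1 × Λ^2 with bracket θ ∧ θ'. *)
Definition Fn (R : comNzRingType) (n : nat) := (Lam R n 1 * Lam R n 2)%type.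

Definition Fn_mul (R : comNzRingType) (n : nat) (p q : Fn R n) : Fn R n :=
  (p.1 + q.1, p.2 + q.2 + wedge p.1 q.1).

Definition step2_bracket (R : fieldType) (V1 V2 : vectType R)
    (br : V1 -> V1 -> V2) : Prop :=
  [/\ (forall y, linear (br ^~ y)),
      (forall x, linear (br x)),
      (forall x y, br x y = - br y x),
      (forall z : V2, exists (m : nat) (c : 'I_m -> R) (x y : 'I_m -> V1),
          z = \sum_(i < m) c i *: br (x i) (y i))
    & exists z : V2, z != 0].

Definition G_mul (R : ringType) (V1 V2 : lmodType R) (br : V1 -> V1 -> V2)
   (g h : V1 * V2) : V1 * V2 := (g.1 + h.1, g.2 + h.2 + br g.1 h.1).

Definition carnot_rank (R : fieldType) (V1 : vectType R) : nat := \dim (fullv : {vspace V1}).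

Definition carnot_map (R : comNzRingType) n (V1 V2 : Type)
  (pi1 : Lam R n 1 -> V1) (pi2 : Lam R n 2 -> V2) (p : Fn R n) : V1 * V2 :=
  (pi1 p.1, pi2 p.2).

Definition carnot_morphism (R : fieldType) n (V1 V2 : vectType R)
  (br : V1 -> V1 -> V2) (pi1 : Lam R n 1 -> V1) (pi2 : Lam R n 2 -> V2) : Prop :=
  [/\ linear pi1, linear pi2 &
      forall x y : Lam R n 1, pi2 (wedge x y) = br (pi1 x) (pi1 y)].

Definition in_ker (R : fieldType) n (V1 V2 : vectType R)
  (pi1 : Lam R n 1 -> V1) (pi2 : Lam R n 2 -> V2) (p : Fn R n) : Prop :=
  carnot_map pi1 pi2 p = (0, 0).

Definition in_Anh (R : comNzRingType) n m (eta : Lam R n m) (p : Fn R n) : Prop :=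
  wedge p.1 eta = 0 /\ wedge p.2 eta = 0.

Definition in_Lam_pi (R : fieldType) n m (V1 V2 : vectType R)
  (pi1 : Lam R n 1 -> V1) (pi2 : Lam R n 2 -> V2) (eta : Lam R n m) : Prop :=
  forall p : Fn R n, in_ker pi1 pi2 p -> in_Anh eta p.

Definition psi_tilde (R : comNzRingType) (n k : nat) (eta : Lam R n (n - k))
  (p : Fn R n) : Lam R n n :=
  if ~~ odd k then
    proj n (ext_wedge (ext_pow (inj p.2) k./2) (inj eta))
  else
    proj n (ext_wedge (inj p.1) (ext_wedge (ext_pow (inj p.2) k./2) (inj eta))).
Arguments psi_tilde {R n} k eta p.

(* Main.v *)
Set Warnings "-redundant-canonical-projection,-notation-overridden,-ambiguous-paths,-deprecated,-deprecated-syntactic-definition".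
Require Import Defs.
From HB Require Import structures.
From mathcomp Require Import all_boot all_order all_algebra.
From mathcomp Require Import reals ring zify.
From Stdlib Require Import FunctionalExtensionality.
Set Implicit Arguments. Unset Strict Implicit. Unset Printing Implicit Defensive.
Import Order.TTheory GRing.Theory Num.Theory.
Local Open Scope ring_scope.
Section Ext.
Variable R : numFieldType.
Variable n : nat.
Local Notation E := {ffun {set 'I_n} -> R^o}.
Implicit Types A B C D : {set 'I_n}.

Definition eb A : E := [ffun B => (B == A)%:R].

Definition invn A B : nat := \sum_(a in A) \sum_(b in B) (b < a)%N.

Lemma invn_full A B : invn A B = \sum_a \sum_b ((a \in A) && (b \in B) && (b < a)%N : nat).
Proof.
rewrite /invn big_mkcond; apply: eq_bigr => a _; rewrite big_mkcond.
case: (a \in A) => /=; last by rewrite big1.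
by apply: eq_bigr => b _; case: (b \in B).
Qed.

Lemma invnE A B : #|[set p : 'I_n * 'I_n | [&& p.1 \in A, p.2 \in B & (p.2 < p.1)%N]]| = invn A B.
Proof.
rewrite invn_full pair_big /= -sum1_card big_mkcond /=; apply: eq_bigr => [[a b]] _ /=.
by rewrite inE /= andbA; case: (_ && _ && _).
Qed.

Lemma esignE A B : esign R A B = (-1) ^+ invn A B.
Proof. by rewrite /esign invnE. Qed.

Lemma invnUl A B C : [disjoint A & B] -> invn (A :|: B) C = (invn A C + invn B C)%N.
Proof.
move=> dAB; rewrite !invn_full -big_split; apply: eq_bigr => a _.
rewrite -big_split; apply: eq_bigr => b _ /=; rewrite in_setU.
case aA: (a \in A); case aB: (a \in B) => /=.
- by rewrite (disjointFr dAB aA) in aB.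
all: by rewrite ?addn0.
Qed.

Lemma invnUr A B C : [disjoint B & C] -> invn A (B :|: C) = (invn A B + invn A C)%N.
Proof.
move=> dBC; rewrite !invn_full -big_split; apply: eq_bigr => a _.
rewrite -big_split; apply: eq_bigr => b _ /=; rewrite in_setU.
case bB: (b \in B); case bC: (b \in C) => /=; rewrite ?andbF ?andbT ?addn0 //.
by rewrite (disjointFr dBC bB) in bC.
Qed.

Lemma invn_swap A B : [disjoint A & B] -> (invn A B + invn B A)%N = (#|A| * #|B|)%N.
Proof.
move=> dAB.
have -> : (#|A| * #|B| = \sum_a \sum_b ((a \in A) && (b \in B) : nat))%N.
  rewrite -sum_nat_const big_mkcond; apply: eq_bigr => a _ /=.
  case: (a \in A) => /=; last by rewrite big1.
  by rewrite -sum1_card big_mkcond.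
rewrite (invn_full B A) (exchange_big) invn_full -big_split; apply: eq_bigr => a _.
rewrite -big_split; apply: eq_bigr => b _ /=.
case aA: (a \in A); case bB: (b \in B) => //=.
case: (ltngtP a b) => // /val_inj eab.
by rewrite -eab (disjointFr dAB aA) in bB.
Qed.

Lemma esign_swap A B : [disjoint A & B] -> ~~ odd #|A| -> esign R A B = esign R B A.
Proof.
move=> dAB eA; rewrite !esignE -signr_odd -[in RHS]signr_odd.
congr (_ ^+ _); move/(congr1 odd): (invn_swap dAB); rewrite oddD oddM (negbTE eA) /=.
by case: (odd (invn A B)); case: (odd (invn B A)).
Qed.

Lemma esignUl A B C : [disjoint A & B] -> esign R (A :|: B) C = esign R A C * esign R B C.
Proof. by move=> d; rewrite !esignE invnUl // exprD. Qed.

Lemma esignUr A B C : [disjoint B & C] -> esign R A (B :|: C) = esign R A B * esign R A C.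
Proof. by move=> d; rewrite !esignE invnUr // exprD. Qed.

Implicit Types (x y z : E) (c : R).
Lemma scaleoE c (a : R^o) : c *: a = c * a. Proof. by []. Qed.
Definition w (x y : E) : E := ext_wedge x y.

Lemma wedgeDl x y z : w (x + y) z = w x z + w y z.
Proof.
apply/ffunP => C; rewrite /w; rewrite !ffunE -big_split; apply: eq_bigr => A _.
by rewrite !ffunE mulrDr mulrDl.
Qed.

Lemma wedgeDr x y z : w x (y + z) = w x y + w x z.
Proof.
apply/ffunP => C; rewrite /w; rewrite !ffunE -big_split; apply: eq_bigr => A _.
by rewrite !ffunE mulrDr.
Qed.

Lemma wedgeZl c x y : w (c *: x) y = c *: w x y.
Proof.
apply/ffunP => C; rewrite /w !ffunE scaler_sumr; apply: eq_bigr => A _.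
rewrite !ffunE /GRing.scale /=; ring.
Qed.

Lemma wedgeZr c x y : w x (c *: y) = c *: w x y.
Proof.
apply/ffunP => C; rewrite /w !ffunE scaler_sumr; apply: eq_bigr => A _.
rewrite !ffunE /GRing.scale /=; ring.
Qed.

Lemma wedge0l y : w 0 y = 0.
Proof. by apply/ffunP => C; rewrite /w /w; rewrite !ffunE big1 // => A _; rewrite ffunE mulr0 mul0r. Qed.

Lemma wedge0r y : w y 0 = 0.
Proof. by apply/ffunP => C; rewrite /w /w; rewrite !ffunE big1 // => A _; rewrite ffunE mulr0. Qed.

Lemma wedge_suml (I : Type) (r : seq I) (P : pred I) (F : I -> E) y :
  w (\sum_(i <- r | P i) F i) y = \sum_(i <- r | P i) w (F i) y.
Proof. exact: (big_morph (w ^~ y) (fun a b => wedgeDl a b y) (wedge0l y)). Qed.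

Lemma wedge_sumr (I : Type) (r : seq I) (P : pred I) (F : I -> E) y :
  w y (\sum_(i <- r | P i) F i) = \sum_(i <- r | P i) w y (F i).
Proof. exact: (big_morph (w y) (wedgeDr y) (wedge0r y)). Qed.

Lemma ext_decomp (x : E) : x = \sum_A x A *: eb A.
Proof.
apply/ffunP => C; rewrite /w; rewrite sum_ffunE (bigD1 C) //= big1 ?addr0.
  by rewrite !ffunE eqxx scaleoE mulr1.
by move=> A nAC; rewrite !ffunE eq_sym (negbTE nAC) scaleoE mulr0.
Qed.

Lemma wedge_expand x y :
  w x y = \sum_A \sum_B (x A * y B) *: w (eb A) (eb B).
Proof.
rewrite {1}[x]ext_decomp wedge_suml; apply: eq_bigr => A _.
rewrite wedgeZl {1}[y]ext_decomp wedge_sumr scaler_sumr; apply: eq_bigr => B _.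
by rewrite wedgeZr scalerA.
Qed.

Lemma ebE A B : eb A B = (B == A)%:R.
Proof. by rewrite ffunE. Qed.

Lemma disjointE A B : [disjoint A & B] = [forall x, ~~ ((x \in A) && (x \in B))].
Proof.
apply/idP/forallP => [d x|h]; first by apply/negP => /andP[xa xb]; rewrite (disjointFr d xa) in xb.
by apply/pred0P => x /=; apply/negbTE; exact: h.
Qed.

Lemma eb_mul A B :
  w (eb A) (eb B) = if [disjoint A & B] then esign R A B *: eb (A :|: B) else 0.
Proof.
apply/ffunP => C; rewrite /w ffunE.
case: (boolP (A \subset C)) => sAC.
- rewrite (bigD1 A) ?powersetE //= big1 ?addr0; last first.
    by move=> A' /andP[_ nA]; rewrite !ebE (negbTE nA) mulr0 mul0r.
  rewrite !ebE eqxx mulr1.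
  case: ifP => dAB.
  + rewrite ffunE ebE scaleoE.
    have -> : (C :\: A == B) = (C == A :|: B).
      apply/eqP/eqP => [<-|->]; apply/setP => x; rewrite !inE.
        by case xA: (x \in A) => //=; rewrite (subsetP sAC).
      by case xA: (x \in A) => //=; rewrite (disjointFr dAB xA).
    by case: eqP => [->|_]; rewrite ?mulr0 // setUC setDUl setDv setU0 (setDidPl _) // disjoint_sym.
  + rewrite ffunE; case: eqP => [eB|]; rewrite ?mulr0 //.
    move: dAB; rewrite -eB disjoint_sym disjoints_subset subsetDr //.
- rewrite big1; last first.
    move=> A' sA'; rewrite !ebE; case: eqP => [eA|]; rewrite ?mulr0 ?mul0r //.
    by move: sA'; rewrite powersetE eA (negbTE sAC).
  case: ifP => _; rewrite !ffunE //.
  case: eqP => [eC|]; rewrite ?scaleoE ?mulr0 //.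
  by move: sAC; rewrite eC subsetUl.
Qed.

Lemma disjUl A B C : [disjoint A :|: B & C] = [disjoint A & C] && [disjoint B & C].
Proof. by rewrite -disjointU; apply: eq_disjoint => x; rewrite !inE. Qed.

Lemma disjUr A B C : [disjoint A & B :|: C] = [disjoint A & B] && [disjoint A & C].
Proof. by rewrite ![[disjoint A & _]]disjoint_sym disjUl. Qed.

Lemma eb_assoc A B C : w (w (eb A) (eb B)) (eb C) = w (eb A) (w (eb B) (eb C)).
Proof.
rewrite !eb_mul.
case dAB: [disjoint A & B]; case dBC: [disjoint B & C];
  rewrite ?wedgeZl ?wedgeZr ?wedge0l ?wedge0r ?eb_mul ?disjUl ?disjUr ?dAB ?dBC ?andbF //=.
all: case dAC: [disjoint A & C]; rewrite /= ?scaler0 //.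
rewrite !scalerA setUA esignUl // esignUr //; congr (_ *: _); ring.
Qed.

Lemma wedge3L x y z : w (w x y) z =
  \sum_A \sum_B \sum_C (x A * y B * z C) *: w (w (eb A) (eb B)) (eb C).
Proof.
rewrite (wedge_expand x y) wedge_suml; apply: eq_bigr => A _.
rewrite wedge_suml; apply: eq_bigr => B _.
rewrite wedgeZl {1}[z]ext_decomp wedge_sumr scaler_sumr; apply: eq_bigr => C _.
by rewrite wedgeZr scalerA.
Qed.

Lemma wedge3R x y z : w x (w y z) =
  \sum_A \sum_B \sum_C (x A * y B * z C) *: w (eb A) (w (eb B) (eb C)).
Proof.
rewrite {1}[x]ext_decomp wedge_suml; apply: eq_bigr => A _.
rewrite wedgeZl (wedge_expand y z) wedge_sumr scaler_sumr; apply: eq_bigr => B _.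
rewrite wedge_sumr scaler_sumr; apply: eq_bigr => C _.
by rewrite wedgeZr scalerA mulrA.
Qed.

Lemma wedgeA x y z : w (w x y) z = w x (w y z).
Proof.
rewrite wedge3L wedge3R; apply: eq_bigr => A _; apply: eq_bigr => B _; apply: eq_bigr => C _.
by rewrite eb_assoc.
Qed.

Lemma eb0E : eb set0 = ext_one R n.
Proof. by []. Qed.

Lemma esign0l B : esign R set0 B = 1.
Proof. by rewrite esignE /invn big_pred0 // => a; rewrite inE. Qed.

Lemma esign0r A : esign R A set0 = 1.
Proof. by rewrite esignE /invn big1 // => a _; rewrite big_pred0 // => b; rewrite inE. Qed.

Lemma wedge1l x : w (eb set0) x = x.
Proof.
rewrite [RHS]ext_decomp wedge_expand (bigD1 set0) //= [X in _ + X]big1 ?addr0; last first.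
  by move=> A nA; rewrite big1 // => B _; rewrite ebE (negbTE nA) mul0r scale0r.
apply: eq_bigr => B _; rewrite ebE eqxx mul1r eb_mul.
have -> : [disjoint set0 & B] by apply/pred0P => y /=; rewrite inE.
by rewrite set0U esign0l scale1r.
Qed.

Lemma wedge1r x : w x (eb set0) = x.
Proof.
rewrite [RHS]ext_decomp wedge_expand; apply: eq_bigr => A _.
rewrite (bigD1 set0) //= big1 ?addr0; last first.
  by move=> B nB; rewrite ebE (negbTE nB) mulr0 scale0r.
rewrite ebE eqxx mulr1 eb_mul.
have -> : [disjoint A & set0] by apply/pred0P => y /=; rewrite inE andbF.
by rewrite setU0 esign0r scale1r.
Qed.

Lemma one_neq0 : eb set0 != 0.
Proof. by apply/eqP => /ffunP/(_ set0); rewrite !ffunE eqxx; apply/eqP; exact: oner_neq0. Qed.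

Definition EA := E.
HB.instance Definition _ := GRing.Lmodule.on EA.
HB.instance Definition _ := @GRing.Zmodule_isNzRing.Build EA (eb set0 : EA) (w : EA -> EA -> EA) (fun x y z => esym (wedgeA x y z)) wedge1l wedge1r wedgeDl wedgeDr one_neq0.
Lemma scalerAl_ c (u v : EA) : c *: (w u v) = w (c *: u) v.
Proof. by rewrite wedgeZl. Qed.
HB.instance Definition _ := GRing.Lmodule_isLalgebra.Build R EA scalerAl_.
Lemma scalerAr_ c (u v : EA) : c *: (w u v) = w u (c *: v).
Proof. by rewrite wedgeZr. Qed.
HB.instance Definition _ := GRing.Lalgebra_isAlgebra.Build R EA scalerAr_.

Lemma mulEA (x y : EA) : x * y = w x y. Proof. by []. Qed.
Lemma oneEA : (1 : EA) = eb set0. Proof. by []. Qed.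

Implicit Types (u v : EA).
Definition hom (d : nat) (x : EA) := forall A, #|A| != d -> x A = 0.

Lemma hom0 d : hom d 0.
Proof. by move=> A _; rewrite ffunE. Qed.

Lemma homD d u v : hom d u -> hom d v -> hom d (u + v).
Proof. by move=> hu hv A hA; rewrite ffunE hu // hv // addr0. Qed.

Lemma homZ d c u : hom d u -> hom d (c *: u).
Proof. by move=> hu A hA; rewrite ffunE hu // scaleoE mulr0. Qed.

Lemma homN d u : hom d u -> hom d (- u).
Proof. by move=> hu A hA; rewrite ffunE hu // oppr0. Qed.

Lemma hom_sum d (I : Type) (r : seq I) (P : pred I) (F : I -> EA) :
  (forall i, P i -> hom d (F i)) -> hom d (\sum_(i <- r | P i) F i).
Proof.
move=> h; elim/big_rec: _ => [|i x Pi hx]; first exact: hom0.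
exact: homD (h i Pi) hx.
Qed.

Lemma hom_eb A : hom #|A| (eb A).
Proof. by move=> B hB; rewrite ebE; case: eqP => // eBA; rewrite eBA eqxx in hB. Qed.

Lemma homM d e u v : hom d u -> hom e v -> hom (d + e) (u * v).
Proof.
move=> hu hv C hC; change (w u v C = 0); rewrite /w ffunE big1 // => A; rewrite powersetE => sAC.
have hCA : #|C :\: A| = (#|C| - #|A|)%N by rewrite cardsD (setIidPr sAC).
have leAC : (#|A| <= #|C|)%N by exact: subset_leq_card.
case: (eqVneq #|A| d) => hA; last by rewrite hu // mulr0 mul0r.
rewrite hv ?mulr0 // hCA; apply: contra hC => /eqP h; apply/eqP.
rewrite -hA -h; lia.
Qed.

Lemma hom1 : hom 0 1.
Proof. by by have := @hom_eb set0; rewrite cards0. Qed.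

Lemma homX d u j : hom d u -> hom (d * j) (u ^+ j).
Proof.
move=> hu; elim: j => [|j IH]; first by rewrite muln0 expr0; exact: hom1.
by rewrite exprS mulnS; exact: homM.
Qed.

Lemma eb_comm A B : ~~ odd #|A| -> (eb A : EA) * eb B = (eb B : EA) * eb A.
Proof.
move=> eA; rewrite !mulEA !eb_mul disjoint_sym setUC.
by case: ifP => // d; rewrite esign_swap // disjoint_sym.
Qed.

Lemma hom_comm d u v : hom d u -> ~~ odd d -> GRing.comm u v.
Proof.
move=> hu ed; rewrite /GRing.comm !mulEA (wedge_expand u v) (wedge_expand v u) [RHS]exchange_big /=.
apply: eq_bigr => A _; apply: eq_bigr => B _.
case: (eqVneq #|A| d) => hA; last by rewrite hu // mul0r mulr0 !scale0r.
by rewrite mulrC -!mulEA eb_comm // hA.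
Qed.

Lemma binom_sq0 (x b : EA) k : GRing.comm x b -> b * b = 0 ->
  (x + b) ^+ k.+1 = x ^+ k.+1 + (x ^+ k * b) *+ k.+1.
Proof.
move=> cxb bb; rewrite exprDn_comm // big_ord_recl big_ord_recl /= big1; last first.
  by move=> i _; rewrite /bump /= !add1n !exprS [b * (b * _)]mulrA bb !mul0r mulr0 mul0rn.
by rewrite /bump /= subn0 expr0 mulr1 bin0 mulr1n expr1 add1n subn1 bin1 addr0 /=.
Qed.

Lemma pair_lemma m : forall U : {set 'I_n}, #|U| = (2 * m)%N ->
  exists (om : EA) (c : R), [/\ hom 2 om, c != 0, om ^+ m = c *: eb U & om ^+ m.+1 = 0].
Proof.
elim: m => [|m IH] U hU.
  exists 0, 1; split; [exact: hom0 | exact: oner_neq0 | | by rewrite expr1].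
  by move/eqP: hU; rewrite muln0 cards_eq0 => /eqP ->; rewrite expr0 scale1r oneEA.
have : (0 < #|U|)%N by rewrite hU; lia.
case/card_gt0P => a aU.
have hU1 : #|U :\ a| = (2 * m).+1 by move: (cardsD1 a U); rewrite aU hU; lia.
have : (0 < #|U :\ a|)%N by rewrite hU1.
case/card_gt0P => b bU1.
have hU2 : #|U :\ a :\ b| = (2 * m)%N by move: (cardsD1 b (U :\ a)); rewrite bU1 hU1; lia.
have [om' [c' [h2 c0 hm hm1]]] := IH _ hU2.
have ab : b != a by move: bU1; rewrite !inE => /andP[].
set P := [set a; b].
have hP : #|P| = 2 by rewrite cards2 eq_sym ab.
set be : EA := eb P.
have hbe : hom 2 be by have := @hom_eb P; rewrite hP.
have bb : be * be = 0.
  rewrite mulEA eb_mul; case: ifP => // d; exfalso.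
  by move: d; rewrite disjointE => /forallP/(_ a); rewrite !inE eqxx.
have cm : GRing.comm om' be by exact: (hom_comm be h2).
have dP : [disjoint U :\ a :\ b & P].
  rewrite disjointE; apply/forallP => y; rewrite !inE.
  by case: (y == a); case: (y == b); rewrite ?andbF.
have UP : U :\ a :\ b :|: P = U.
  have bU : b \in U by move: bU1; rewrite !inE => /andP[].
  apply/setP => y; rewrite !inE.
  case: (boolP (y == a)) => [/eqP->|ya]; first by rewrite aU ?eqxx ?orbT.
  case: (boolP (y == b)) => [/eqP->|yb]; first by rewrite bU ?eqxx ?orbT.
  by rewrite /= ?orbF.
exists (om' + be), (c' * (m.+1)%:R * esign R (U :\ a :\ b) P); split.
- by apply: homD.
- by rewrite !mulf_neq0 // ?pnatr_eq0 // esignE signr_eq0.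
- rewrite binom_sq0 // hm1 add0r hm -scalerAl mulEA eb_mul dP scalerA UP.
  by rewrite -scaler_nat scalerA; congr (_ *: _); ring.
- rewrite binom_sq0 // exprS hm1 mulr0 mul0r mul0rn addr0 //.
Qed.
Implicit Types (S T : {set 'I_n}).

Lemma ebC_coef S (z : EA) : ((eb (~: S) : EA) * z) setT = esign R (~: S) S * z S.
Proof.
rewrite mulEA /w ffunE (bigD1 (~: S)) ?powersetE ?subsetT //= big1 ?addr0; last first.
  by move=> A /andP[_ nA]; rewrite ebE (negbTE nA) mulr0 mul0r.
by rewrite ebE eqxx mulr1 setTD setCK.
Qed.

Lemma kill_hom (z : EA) d : hom d z ->
  (forall S, #|S| = d -> ((eb (~: S) : EA) * z) setT = 0) -> z = 0.
Proof.
move=> hz H; apply/ffunP => S; rewrite [RHS]ffunE.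
case: (eqVneq #|S| d) => h; last exact: hz.
have := H S h; rewrite ebC_coef => /eqP; rewrite mulf_eq0 esignE signr_eq0 /=.
by move/eqP.
Qed.

Lemma poly_kill (x y L M : EA) (j : nat) T : GRing.comm x y ->
  (forall t : R, (L * (x + t *: y) ^+ j.+1 * M) T = (L * x ^+ j.+1 * M) T) ->
  (L * (x ^+ j * y) * M) T = 0.
Proof.
move=> cxy H.
pose d i := (L * (x ^+ (j.+1 - i) * y ^+ i) * M) T.
have expand : forall t, (L * (x + t *: y) ^+ j.+1 * M) T =
    \sum_(i < j.+2) (d i * 'C(j.+1, i)%:R) * t ^+ i.
  move=> t; rewrite exprDn_comm; last by rewrite /GRing.comm -scalerAr -scalerAl cxy.
  rewrite mulr_sumr mulr_suml sum_ffunE; apply: eq_bigr => i _.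
  rewrite exprZn -scalerAr mulrnAr -scalerAr mulrnAl -scalerAl ffunMnE ffunE scaleoE.
  by rewrite -mulr_natr /d; ring.
pose P := \poly_(i < j.+2) (d i * 'C(j.+1, i)%:R) - (d 0%N)%:P.
have P0 : P = 0.
  apply: (@roots_geq_poly_eq0 _ P [seq i%:R | i <- iota 0 j.+3]).
  - apply/allP => r /mapP [i _ ->]; rewrite /root /P hornerD hornerN horner_poly hornerC -expand H.
    by rewrite /d subn0 expr0 mulr1 subrr.
  - rewrite map_inj_uniq ?iota_uniq // => a b /eqP; rewrite eqr_nat => /eqP.
    by [].
  - rewrite size_map size_iota; apply: leq_trans (size_polyD _ _) _.
    rewrite geq_max size_polyN (leq_trans (size_poly _ _)) //.
    by rewrite (leq_trans (size_polyC_leq1 _)).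
have := congr1 (fun p : {poly R} => p`_1) P0.
rewrite coefB coef_poly coefC /= coef0 subr0 => /eqP; rewrite mulf_eq0 pnatr_eq0 bin1 /= orbF => /eqP.
by rewrite /d subn1 expr1 /=.
Qed.

Section Link.
Variable m : nat.
Implicit Types (a b : Lam R n m).

Lemma inj_hom a : hom m (inj a).
Proof.
move=> A hA; rewrite ffunE; case: insubP => [s hs es|//].
by rewrite (eqP hs) eqxx in hA.
Qed.

Lemma proj_injK a : proj m (inj a) = a.
Proof.
apply/ffunP => s; rewrite !ffunE; case: insubP => [s' _ e|]; last by rewrite (valP s).
by congr (a _); apply: val_inj.
Qed.

Lemma inj_projK (x : EA) : hom m x -> inj (proj m x) = x.
Proof.
move=> hx; apply/ffunP => A; rewrite ffunE; case: insubP => [s hs es|hn].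
  by rewrite ffunE es.
by rewrite hx.
Qed.

Lemma injD a b : inj (a + b) = (inj a : EA) + inj b.
Proof.
apply/ffunP => A; rewrite !ffunE; case: insubP => [s hs es|hn]; by rewrite ?ffunE ?addr0.
Qed.

Lemma injZ c a : inj (c *: a) = c *: (inj a : EA).
Proof.
apply/ffunP => A; rewrite !ffunE; case: insubP => [s hs es|hn]; by rewrite ?ffunE ?scaleoE ?mulr0.
Qed.

Lemma inj0 : inj (0 : Lam R n m) = 0.
Proof. by apply/ffunP => A; rewrite !ffunE; case: insubP => [s hs es|hn]; rewrite ?ffunE. Qed.

Lemma inj_eq0 a : inj a = 0 -> a = 0.
Proof. by move=> h; rewrite -(proj_injK a) h -inj0 proj_injK. Qed.

End Link.

Lemma inj_wedge p q (a : Lam R n p) (b : Lam R n q) :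
  inj (wedge a b) = (inj a : EA) * inj b.
Proof. by rewrite /wedge inj_projK //; exact: homM (inj_hom a) (inj_hom b). Qed.

Lemma ext_powE (x : EA) j : ext_pow x j = x ^+ j.
Proof. by elim: j => [|j IH] //=; rewrite exprS -IH. Qed.

Lemma psiE k (eta : Lam R n (n - k)) (p : Fn R n) :
  psi_tilde k eta p =
  if ~~ odd k then proj n ((inj p.2 : EA) ^+ k./2 * inj eta)
  else proj n ((inj p.1 : EA) * ((inj p.2 : EA) ^+ k./2 * inj eta)).
Proof. by rewrite /psi_tilde !ext_powE. Qed.

Lemma CtoB k (eta : Lam R n (n - k)) (K : Fn R n -> Prop)
  (HC : forall q, K q -> wedge q.1 eta = 0 /\ wedge q.2 eta = 0) :
  forall p q, K q -> psi_tilde k eta p = psi_tilde k eta (Fn_mul p q).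
Proof.
move=> p q Kq; have [h1 h2] := HC q Kq.
have Z1 : (inj q.1 : EA) * inj eta = 0 by rewrite -inj_wedge h1 inj0.
have Z2 : (inj q.2 : EA) * inj eta = 0 by rewrite -inj_wedge h2 inj0.
rewrite !psiE /Fn_mul /= !injD (@inj_wedge 1 1) -addrA.
set x : EA := inj p.2; set y : EA := inj q.2 + (inj p.1 : EA) * inj q.1.
have yZ : y * inj eta = 0 by rewrite /y mulrDl Z2 -mulrA Z1 mulr0 addr0.
have hy : hom 2 y by apply: homD; [exact: inj_hom | exact: (homM (inj_hom p.1) (inj_hom q.1))].
have hx : hom 2 x by exact: inj_hom.
have key : forall j, (x + y) ^+ j * inj eta = x ^+ j * inj eta.
  elim=> [|j IH]; first by rewrite !expr0.
  rewrite exprS -mulrA IH mulrDl exprS -mulrA [y * _]mulrA (hom_comm (x ^+ j) hy) //.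
  by rewrite -mulrA yZ mulr0 addr0.
case: ifP => _; first by rewrite key.
rewrite key mulrDl; congr (proj n _).
have hxj := homX (j:=k./2) hx.
by rewrite [X in _ + X]mulrA -(hom_comm (inj q.1) hxj) ?oddM // -mulrA Z1 mulr0 addr0.
Qed.

Lemma cardC_S S : #|~: S| = (n - #|S|)%N.
Proof. by rewrite cardsCs setCK card_ord. Qed.

Lemma card_le S : (#|S| <= n)%N.
Proof. by have := max_card (mem S); rewrite card_ord. Qed.

Lemma coefT_eq (X Y : EA) : proj n X = proj n Y -> X setT = Y setT.
Proof.
have hT : #|[set: 'I_n]| == n by rewrite cardsT card_ord.
by move/ffunP/(_ (exist _ setT hT)); rewrite !ffunE.
Qed.

Lemma wedge_0l p q (b : Lam R n q) : wedge (0 : Lam R n p) b = 0.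
Proof. by apply: inj_eq0; rewrite inj_wedge inj0 mul0r. Qed.

Lemma wedge_0r p q (b : Lam R n p) : wedge b (0 : Lam R n q) = 0.
Proof. by apply: inj_eq0; rewrite inj_wedge inj0 mulr0. Qed.

Lemma inj_e1 a : inj (proj 1 (eb [set a])) = eb [set a].
Proof. by rewrite inj_projK //; have := @hom_eb [set a]; rewrite cards1. Qed.

Lemma eb_disj_mul A B : [disjoint A & B] -> (eb A : EA) * eb B = esign R A B *: eb (A :|: B).
Proof. by move=> d; rewrite mulEA eb_mul d. Qed.

Lemma scaled_kill c (X Z : EA) T : c != 0 -> ((c *: X) * Z) T = 0 -> (X * Z) T = 0.
Proof.
move=> c0; rewrite -scalerAl ffunE scaleoE => /eqP; rewrite mulf_eq0 (negbTE c0) /=.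
by move/eqP.
Qed.

Lemma esign_neq0 A B : esign R A B != 0.
Proof. by rewrite esignE signr_eq0. Qed.

Lemma scaled_kill' c (X : EA) T : c != 0 -> (c *: X) T = 0 -> X T = 0.
Proof.
move=> c0; rewrite ffunE scaleoE => /eqP; rewrite mulf_eq0 (negbTE c0) /=.
by move/eqP.
Qed.

Section BC.
Variables (k : nat) (hk : (k <= n)%N) (eta : Lam R n (n - k)) (K : Fn R n -> Prop).
Hypotheses (K1 : forall q, K q -> K (q.1, 0)) (K2 : forall q t, K q -> K (0, t *: q.2))
  (HB : forall p q, K q -> psi_tilde k eta p = psi_tilde k eta (Fn_mul p q)).
Variables (q : Fn R n) (Kq : K q).

Let Z1 : EA := (inj q.1 : EA) * inj eta.
Let Z2 : EA := (inj q.2 : EA) * inj eta.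
Let h1 : hom (1 + (n - k)) Z1 := homM (inj_hom q.1) (inj_hom eta).
Let h2 : hom (2 + (n - k)) Z2 := homM (inj_hom q.2) (inj_hom eta).

Lemma odd_Z1 : odd k -> Z1 = 0.
Proof.
move=> Ok; apply: (kill_hom h1) => S hS.
have hU : #|~: S| = (2 * k./2)%N.
  rewrite cardC_S hS; have := odd_double_half k; rewrite Ok -muln2; lia.
have [om [c [hom2 c0 homj _]]] := pair_lemma hU.
have := HB (0, proj 2 om) (K1 Kq).
rewrite !psiE Ok /Fn_mul /= add0r addr0 wedge_0l addr0 inj0 mul0r (inj_projK hom2).
move/coefT_eq; rewrite ffunE => /esym.
rewrite mulrA -(hom_comm (inj q.1) (homX (j:=k./2) hom2)) // ?oddM // -mulrA homj.
by move/(scaled_kill c0).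
Qed.

Lemma odd_Z2 : odd k -> Z2 = 0.
Proof.
move=> Ok; apply: (kill_hom h2) => S hS.
have kk := odd_double_half k; rewrite Ok in kk.
case Ej: k./2 => [|j'].
  by exfalso; have := card_le S; rewrite Ej in kk; lia.
rewrite Ej in kk.
have hU : #|~: S| = (2 * j').+1 by rewrite cardC_S hS; rewrite -muln2 in kk; lia.
have : (0 < #|~: S|)%N by rewrite hU.
case/card_gt0P => a aU.
have hU' : #|~: S :\ a| = (2 * j')%N by move: (cardsD1 a (~: S)); rewrite aU hU; lia.
have [om [c [hom2 c0 homj _]]] := pair_lemma hU'.
have hyp : forall t : R, ((eb [set a] : EA) * (om + t *: (inj q.2 : EA)) ^+ j'.+1 * inj eta) setT =
    ((eb [set a] : EA) * om ^+ j'.+1 * inj eta) setT.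
  move=> t; have := HB (proj 1 (eb [set a]), proj 2 om) (K2 t Kq).
  rewrite !psiE Ok /Fn_mul /= addr0 wedge_0r addr0 injD injZ inj_e1 !(inj_projK hom2) Ej.
  by move/coefT_eq => /esym; rewrite !mulrA.
have := poly_kill (hom_comm (inj q.2) hom2 isT) hyp.
rewrite homj -scalerAl -scalerAr -scalerAl mulrA eb_disj_mul ?disjoints1 ?setD11 //.
rewrite setD1K // -!scalerAl scalerA -mulrA.
by move/(scaled_kill' (mulf_neq0 c0 (esign_neq0 _ _))).
Qed.

Lemma even_Z1 : ~~ odd k -> Z1 = 0.
Proof.
move=> Ok; apply: (kill_hom h1) => S hS.
have kk := odd_double_half k; rewrite (negbTE Ok) add0n in kk.
case Ej: k./2 => [|j'].
  by exfalso; have := card_le S; rewrite Ej in kk; lia.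
rewrite Ej in kk.
have hU : #|~: S| = (2 * j').+1 by rewrite cardC_S hS; rewrite -muln2 in kk; lia.
have : (0 < #|~: S|)%N by rewrite hU.
case/card_gt0P => a aU.
have hU' : #|~: S :\ a| = (2 * j')%N by move: (cardsD1 a (~: S)); rewrite aU hU; lia.
have [om [c [hom2 c0 homj _]]] := pair_lemma hU'.
pose y : EA := (eb [set a] : EA) * inj q.1.
have hyp : forall t : R, (1 * (om + t *: y) ^+ j'.+1 * inj eta) setT =
    (1 * om ^+ j'.+1 * inj eta) setT.
  move=> t; have := HB (t *: proj 1 (eb [set a]), proj 2 om) (K1 Kq).
  rewrite !psiE (negbTE Ok) /Fn_mul /= addr0 injD (@inj_wedge 1 1) injZ inj_e1 !(inj_projK hom2) Ej.
  by move/coefT_eq => /esym; rewrite !mul1r -scalerAl.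
have := poly_kill (hom_comm y hom2 isT) hyp.
rewrite mul1r homj /y -!scalerAl mulrA eb_disj_mul; last by rewrite disjoint_sym disjoints1 setD11.
rewrite setUC setD1K // -!scalerAl scalerA -mulrA.
by move/(scaled_kill' (mulf_neq0 c0 (esign_neq0 _ _))).
Qed.

Lemma even_Z2 : ~~ odd k -> Z2 = 0.
Proof.
move=> Ok; apply: (kill_hom h2) => S hS.
have kk := odd_double_half k; rewrite (negbTE Ok) add0n in kk.
case Ej: k./2 => [|j'].
  by exfalso; have := card_le S; rewrite Ej in kk; lia.
rewrite Ej in kk.
have hU : #|~: S| = (2 * j')%N by rewrite cardC_S hS; rewrite -muln2 in kk; lia.
have [om [c [hom2 c0 homj _]]] := pair_lemma hU.
have hyp : forall t : R, (1 * (om + t *: (inj q.2 : EA)) ^+ j'.+1 * inj eta) setT =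
    (1 * om ^+ j'.+1 * inj eta) setT.
  move=> t; have := HB (0, proj 2 om) (K2 t Kq).
  rewrite !psiE (negbTE Ok) /Fn_mul /= wedge_0l addr0 injD injZ !(inj_projK hom2) Ej.
  by move/coefT_eq => /esym; rewrite !mul1r.
have := poly_kill (hom_comm (inj q.2) hom2 isT) hyp.
rewrite mul1r homj -!scalerAl -mulrA.
by move/(scaled_kill' c0).
Qed.

Lemma BtoC_q : wedge q.1 eta = 0 /\ wedge q.2 eta = 0.
Proof.
have [z1 z2] : Z1 = 0 /\ Z2 = 0.
  case: (boolP (odd k)) => Ok; split.
  - exact: odd_Z1.
  - exact: odd_Z2.
  - exact: even_Z1.
  - exact: even_Z2.
by split; apply: inj_eq0; rewrite inj_wedge; [exact: z1 | exact: z2].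
Qed.

End BC.
End Ext.

Section Lin.
Variables (R : pzRingType) (U V : lmodType R) (f : U -> V).
Hypothesis hf : linear f.

Lemma lin0 : f 0 = 0.
Proof.
have := hf 1 0 0; rewrite !scale1r addr0 => e.
by move/(congr1 (fun x => x - f 0)): e; rewrite subrr addrK => <-.
Qed.

Lemma linZ a u : f (a *: u) = a *: f u.
Proof. by have := hf a u 0; rewrite !addr0 lin0 addr0. Qed.

Lemma linD u v : f (u + v) = f u + f v.
Proof. by have := hf 1 u v; rewrite !scale1r. Qed.

Lemma linB u v : f (u - v) = f u - f v.
Proof. by rewrite linD -scaleN1r linZ scaleN1r. Qed.
End Lin.

Unset Implicit Arguments.
Set Strict Implicit.

Theorem lemma5p6 (R : realType) (V1 V2 : vectType R) (br : V1 -> V1 -> V2)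
  (hG : step2_bracket br) (n k : nat)
  (hn : (carnot_rank V1 <= n)%N) (hk : (k <= n)%N)
  (pi1 : Lam R n 1 -> V1) (pi2 : Lam R n 2 -> V2)
  (hpi : carnot_morphism br pi1 pi2)
  (hsurj : forall g : V1 * V2, exists p : Fn R n, carnot_map pi1 pi2 p = g)
  (eta : Lam R n (n - k)) :
  let A := exists psi : V1 * V2 -> Lam R n n,
             forall p : Fn R n, psi (carnot_map pi1 pi2 p) = psi_tilde k eta p in
  let B := forall p q : Fn R n, in_ker pi1 pi2 q ->
             psi_tilde k eta p = psi_tilde k eta (Fn_mul p q) in
  let C := in_Lam_pi pi1 pi2 eta in
  [/\ A <-> B, B <-> C &
      (A \/ B \/ C) ->
      forall psi psi' : V1 * V2 -> Lam R n n,
        (forall p : Fn R n, psi (carnot_map pi1 pi2 p) = psi_tilde k eta p) ->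
        (forall p : Fn R n, psi' (carnot_map pi1 pi2 p) = psi_tilde k eta p) ->
        psi = psi'].
Proof.
move=> A B C.
case: hpi => lin1 lin2 hbr.
case: hG => _ linbr _ _ _.
have br0 : forall x, br x 0 = 0 by move=> x; exact: lin0 (linbr x).
have kerE : forall q : Fn R n, in_ker pi1 pi2 q <-> pi1 q.1 = 0 /\ pi2 q.2 = 0.
  move=> q; rewrite /in_ker /carnot_map; split; first by case.
  by case=> -> ->.
have K1 : forall q : Fn R n, in_ker pi1 pi2 q -> in_ker pi1 pi2 (q.1, 0).
  by move=> q /kerE [h1 _]; apply/kerE; split => //=; exact: lin0.
have K2 : forall (q : Fn R n) (t : R), in_ker pi1 pi2 q -> in_ker pi1 pi2 (0, t *: q.2).
  by move=> q t /kerE [_ h2]; apply/kerE; split => /=; [exact: lin0 | rewrite (linZ lin2) h2 scaler0].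
have mulker : forall p q : Fn R n, in_ker pi1 pi2 q ->
    carnot_map pi1 pi2 (Fn_mul p q) = carnot_map pi1 pi2 p.
  move=> p q /kerE [h1 h2]; rewrite /carnot_map /Fn_mul /=.
  by rewrite !(linD lin2) (linD lin1) h1 h2 hbr h1 br0 !addr0.
have hBC : B <-> C.
  split.
  - move=> HB q hq; exact: (BtoC_q hk K1 K2 HB hq).
  - move=> HC p q hq; exact: (CtoB HC p hq).
have hAB : A <-> B.
  split.
  - by case=> psi hpsi p q hq; rewrite -!hpsi mulker.
  - move=> HB.
    have hs : forall g : V1 * V2, exists p : Lam R n 1 * Lam R n 2, carnot_map pi1 pi2 p == g.
      by move=> g; have [p hp] := hsurj g; exists p; apply/eqP.
    exists (fun g => psi_tilde k eta (xchoose (hs g))) => p.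
    have e : carnot_map pi1 pi2 (xchoose (hs (carnot_map pi1 pi2 p))) = carnot_map pi1 pi2 p.
      exact: eqP (xchooseP (hs _)).
    move: e; set p' := xchoose _ => e.
    have [e1 e2] : pi1 p'.1 = pi1 p.1 /\ pi2 p'.2 = pi2 p.2.
      by move: e; rewrite /carnot_map; case.
    pose q : Fn R n := (p'.1 - p.1, p'.2 - p.2 - wedge p.1 (p'.1 - p.1)).
    have hq : in_ker pi1 pi2 q.
      apply/kerE; rewrite /q /=; split; first by rewrite (linB lin1) e1 subrr.
      by rewrite !(linB lin2) e2 hbr (linB lin1) e1 subrr subrr br0 subrr.
    have -> : p' = Fn_mul p q.
      rewrite /Fn_mul /q /=; case: p' {e e1 e2 q hq} => a b /=.
      by congr pair; [rewrite addrC subrK | rewrite -addrA subrK addrC subrK].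
    by rewrite -HB.
split => // _ psi psi' h h'.
apply: functional_extensionality => g.
by have [p <-] := hsurj g; rewrite h h'.
Qed.
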